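(* Let $a<b$ be integers. Then there is a non-split short exact sequence in $\mathcal{C}_2$ \[ 0\to(-\infty,b)\xrightarrow{f}(a,b)\xrightarrow{g}(-\infty,a)\to0. \]
   Context: Let $R=\mathbb{C}[x,y]/(x^2)$, graded with $\deg x=1$, $\deg y=-1$; $M(j)_n=M_{j+n}$. $\mathcal{C}_2$ is the exact category of finitely generated $\mathbb{Z}$-graded maximal Cohen–Macaulay $R$-modules with degree-preserving morphisms. An arc is a pair $(a,b)$ with $a\in\mathbb{Z}\cup\{-\infty\}$, $b\in\mathbb{Z}$, $a<b$; a finite arc $(a,b)$ ($a\in\mathbb{Z}$) denotes the module $(x,y^{b-a-1})(1-b)$ (where $(x,y^0)=R$), and an infinite arc $(-\infty,b)$ denotes $\mathbb{C}[y](-b)=(R/(x))(-b)$. *)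

(* Defs.v *)
From HB Require Import structures.
From mathcomp Require Import all_boot all_order all_algebra.
From mathcomp Require Import complex.
From mathcomp Require Import Rstruct.
Set Implicit Arguments. Unset Strict Implicit. Unset Printing Implicit Defensive.
Import Order.TTheory GRing.Theory Num.Theory.
Local Open Scope ring_scope.

Definition CC : fieldType := complex Rdefinitions.R.

(** * Z-graded modules over R = C[x,y]/(x^2), deg x = 1, deg y = -1.
   A graded R-module whose homogeneous components are finite dimensional
   (true for every finitely generated graded R-module, since each R_n has
   dimension <= 2) is encoded by:
   - [gdim n]  : the dimension of the component M_n, with a fixed basis, so
                 that M_n = 'rV[CC]_(gdim n) (row vectors);
   - [gx n]    : the matrix of multiplication by x : M_n -> M_(n+1)
                 (acting on the right of row vectors: v |-> v *m gx n);
   - [gy n]    : the matrix of multiplication by y : M_(n+1) -> M_n. *)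
Record grmod := GrMod {
  gdim : int -> nat;
  gx : forall n : int, 'M[CC]_(gdim n, gdim (n + 1));
  gy : forall n : int, 'M[CC]_(gdim (n + 1), gdim n)
}.

Definition is_grmod (M : grmod) : Prop :=
  (forall n : int, gx M n *m gx M (n + 1) = 0) /\
  (forall n : int, gy M n *m gx M n = gx M (n + 1) *m gy M (n + 1)).

Definition grhom (M N : grmod) := forall n : int, 'M[CC]_(gdim M n, gdim N n).

Definition is_grhom (M N : grmod) (f : grhom M N) : Prop :=
  (forall n : int, gx M n *m f (n + 1) = f n *m gx N n) /\
  (forall n : int, gy M n *m f n = f (n + 1) *m gy N n).

Definition is_ses (A B C : grmod) (f : grhom A B) (g : grhom B C) : Prop :=
  is_grhom f /\ is_grhom g /\
  forall n : int,
    row_free (f n) /\ row_full (g n) /\ (f n == kermx (g n))%MS.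

Definition ses_splits (A B : grmod) (f : grhom A B) : Prop :=
  exists r : grhom B A, is_grhom r /\ forall n : int, f n *m r n = 1%:M.

(** Infinite arc (-oo, b): the module C[y](-b) = (R/(x))(-b).
   Component in degree n is C[y]_(n-b), spanned by y^(b-n) when n <= b,
   zero otherwise.  x acts by 0, y maps y^(b-n-1) to y^(b-n). *)
Definition arc_inf (b : int) : grmod :=
  @GrMod (fun n => nat_of_bool (n <= b))
         (fun n => 0)
         (fun n => \matrix_(i, j) 1).

(** Finite arc (a, b): the module (x, y^(b-a-1))(1-b), where (x,y^0) = R.
   Component in degree n is I_(n+1-b), I = (x, y^(b-a-1)) ⊆ R.  Writing
   m = n+1-b, its monomial basis is
     index 0 : x y^(1-m)   (present iff m <= 1, i.e. n <= b),
     index 1 : y^(-m)      (present iff -m >= b-a-1, i.e. n <= a).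
   y maps each basis vector of degree n+1 to the basis vector of the same
   index in degree n; x kills index 0 and maps index 1 (y^(-m)) in degree n
   to index 0 (x y^(-m)) in degree n+1. *)
Definition arc_fin (a b : int) : grmod :=
  @GrMod (fun n => addn (nat_of_bool (n <= b)) (nat_of_bool (n <= a)))
         (fun n => \matrix_(i, j) ((i == 1%N :> nat) && (j == 0%N :> nat))%:R)
         (fun n => \matrix_(i, j) (i == j :> nat)%:R).

(* Main.v *)
Require Import Defs.
From mathcomp Require Import all_boot all_order all_algebra.
From mathcomp Require Import zify.
Import GRing.Theory Num.Theory.
Local Open Scope ring_scope.

Ltac mxsolve := let i := fresh "i" in let j := fresh "j" in
  apply/matrixP; intros i j; rewrite !mxE ?big_ord_recr ?big_ord0 ?mxE;
  revert i j; do 2 (case=> [[|[|?]] ?] //=);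
  rewrite ?mxE /= ?mulr1n ?mulr0n ?mul0r ?mulr0 ?mul1r ?mulr1 ?add0r ?addr0 //.

Lemma nosplit_aux (pb pa qb qa : bool) (R0 : 'M[CC]_(pb + pa, pb)) (R1 : 'M[CC]_(qb + qa, qb)) :
  pb = true -> pa = true -> qb = true -> qa = false ->
  (\matrix_(i < pb + pa, j < qb + qa) ((i == 1%N :> nat) && (j == 0%N :> nat))%:R) *m R1 = R0 *m 0 ->
  (\matrix_(i < qb, j < qb + qa) (j == 0%N :> nat)%:R) *m R1 = 1%:M -> False.
Proof.
move=> E1 E2 E3 E4; subst pb pa qb qa => /matrixP/(_ (inord 1) ord0) h1 /matrixP/(_ ord0 ord0) h2.
move: h1 h2; rewrite mulmx0 !mxE !big_ord_recr !big_ord0 /= !mxE /= inordK //= => ->.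
rewrite mulr1n => h; have := oner_neq0 CC; by rewrite -h eqxx.
Qed.

Lemma rank_small m n (A : 'M[CC]_(m,n)) : (m <= 1)%N || (n <= 1)%N -> \rank A = (A != 0).
Proof.
move=> h; have [->|nz] := eqVneq A 0; first by rewrite mxrank0.
apply/eqP; rewrite eqn_leq; apply/andP; split.
  case/orP: h => h; [exact: leq_trans (rank_leq_row A) h | exact: leq_trans (rank_leq_col A) h].
by rewrite lt0n mxrank_eq0.
Qed.

Lemma rank_f (pa pb : bool) :
  \rank (\matrix_(i < pb, j < pb + pa) (j == 0%N :> nat)%:R : 'M[CC]_(pb, pb+pa)) = pb.
Proof.
rewrite rank_small; last by case: (pb).
case: pb; last by case: eqP => // -[]; apply/matrixP => -[].
case: eqP => // /matrixP/(_ ord0 ord0); rewrite !mxE /= mulr1n => h; have := oner_neq0 CC; by rewrite h eqxx.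
Qed.

Lemma rank_g (pa pb : bool) : (pa -> pb) ->
  \rank (\matrix_(i < pb + pa, j < pa) (i == 1%N :> nat)%:R : 'M[CC]_(pb+pa, pa)) = pa.
Proof.
move=> hab; rewrite rank_small; last by case: (pa); rewrite orbT.
case: pa hab => hab; last by case: eqP => // -[]; apply/matrixP => ? -[].
rewrite hab //.
case: eqP => // /matrixP/(_ (inord 1) ord0); rewrite !mxE /= inordK //= mulr1n => h; have := oner_neq0 CC; by rewrite h eqxx.
Qed.

Lemma ranklem (pa pb : bool) : (pa -> pb) ->
  row_free (\matrix_(i < pb, j < pb + pa) (j == 0%N :> nat)%:R : 'M[CC]_(pb, pb+pa)) /\
  row_full (\matrix_(i < pb + pa, j < pa) (i == 1%N :> nat)%:R : 'M[CC]_(pb+pa, pa)) /\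
  ((\matrix_(i < pb, j < pb + pa) (j == 0%N :> nat)%:R : 'M[CC]_(pb, pb+pa)) ==
      kermx (\matrix_(i < pb + pa, j < pa) (i == 1%N :> nat)%:R : 'M[CC]_(pb+pa, pa)))%MS.
Proof.
move=> hab.
have sub : ((\matrix_(i < pb, j < pb + pa) (j == 0%N :> nat)%:R : 'M[CC]_(pb, pb+pa)) <=
      kermx (\matrix_(i < pb + pa, j < pa) (i == 1%N :> nat)%:R : 'M[CC]_(pb+pa, pa)))%MS.
  rewrite sub_kermx; apply/eqP/matrixP => i j; rewrite !mxE.
  rewrite big1 // => k _; rewrite !mxE; case: (k == 0%N :> nat) / eqP => [->|]; by rewrite ?mul0r ?mulr0.
rewrite /row_free /row_full -(mxrank_leqif_eq sub).2 mxrank_ker rank_f rank_g // eqxx /=.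
by rewrite addnK.
Qed.

Ltac revimps := repeat match goal with H : is_true _ -> is_true _ |- _ => revert H end.

Ltac prep n a b :=
  let L := constr:((n <= a, n <= b, n+1 <= a, n+1 <= b, n+1+1 <= a, n+1+1 <= b)) in
  match L with (?P1, ?P2, ?P3, ?P4, ?P5, ?P6) =>
  try (have : P1 -> P2 by lia); try (have : P1 -> P4 by lia); try (have : P1 -> P6 by lia);
  try (have : P3 -> P1 by lia); try (have : P3 -> P2 by lia); try (have : P3 -> P4 by lia); try (have : P3 -> P6 by lia);
  try (have : P4 -> P2 by lia); try (have : P5 -> P3 by lia); try (have : P5 -> P6 by lia);
  try (have : P6 -> P4 by lia);
  move: P1 P2 P3 P4 P5 P6;
  case; case; case; case; case; case => /= *;
  try match goal with H : is_true true -> is_true false |- _ => by move: (H isT) end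
  end.

Ltac prep4 n a b :=
  let L := constr:((n <= a, n <= b, n+1 <= a, n+1 <= b)) in
  match L with (?P1, ?P2, ?P3, ?P4) =>
  try (have : P1 -> P2 by lia); try (have : P1 -> P4 by lia);
  try (have : P3 -> P1 by lia); try (have : P3 -> P2 by lia); try (have : P3 -> P4 by lia);
  try (have : P4 -> P2 by lia);
  move: P1 P2 P3 P4;
  case; case; case; case => /= *;
  try match goal with H : is_true true -> is_true false |- _ => by move: (H isT) end
  end.

Definition fmap (a b : int) : grhom (arc_inf b) (arc_fin a b) :=
  fun n => \matrix_(i, j) (j == 0%N :> nat)%:R.
Definition gmap (a b : int) : grhom (arc_fin a b) (arc_inf a) :=
  fun n => \matrix_(i, j) (i == 1%N :> nat)%:R.

Theorem lemma4p6 (a b : int) (hab : a < b) :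
  is_grmod (arc_inf b) /\ is_grmod (arc_fin a b) /\ is_grmod (arc_inf a) /\
  exists (f : grhom (arc_inf b) (arc_fin a b)) (g : grhom (arc_fin a b) (arc_inf a)),
    is_ses f g /\ ~ ses_splits f.
Proof.
split; [|split; [|split]].
- by split=> n /=; rewrite ?mul0mx ?mulmx0.
- split=> n /=; prep n a b; mxsolve.
- by split=> n /=; rewrite ?mul0mx ?mulmx0.
exists (fmap a b), (gmap a b); split.
  split; [|split].
  - split=> n /=; rewrite /fmap /=; prep4 n a b; mxsolve.
  - split=> n /=; rewrite /gmap /=; prep4 n a b; mxsolve.
  - move=> n; rewrite /fmap /gmap /=; apply: ranklem; lia.
case=> r [[hx hy] hr].
apply: (@nosplit_aux (a <= b) (a <= a) (a + 1 <= b) (a + 1 <= a) (r a) (r (a+1))) (hx a) (hr (a+1)).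
- by lia.
- by lia.
- by lia.
- by lia.
Qed.
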